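(* Let $\beta_{\mathtt{H}},\beta_{\mathtt{L}},\gamma_{\mathtt{H}},\gamma_{\mathtt{L}}>0$ with $\beta_{\mathtt{H}}/\gamma_{\mathtt{H}}>\beta_{\mathtt{L}}/\gamma_{\mathtt{L}}$ and $\beta_{\mathtt{H}}>\beta_{\mathtt{L}}$, $q_{\mathtt{LH}}>0$, $\alpha\in(0,1)$, fix $z_{\mathtt{S}}\in[0,1]$, and set $w(z_{\mathtt{S}}):=\alpha z_{\mathtt{S}}+1-z_{\mathtt{S}}$, $\hat\beta_{\mathtt{Q}}(z_{\mathtt{S}}):=\beta_{\mathtt{Q}}w(z_{\mathtt{S}})$. Consider the uni-directional mutation dynamics \begin{align*} \dot{\mathtt{I}}_{\mathtt{H}}&=\hat\beta_{\mathtt{H}}(z_{\mathtt{S}})\mathtt{I}_{\mathtt{H}}(1-\mathtt{I}_{\mathtt{H}}-\mathtt{I}_{\mathtt{L}})+q_{\mathtt{LH}}\mathtt{I}_{\mathtt{L}}-\gamma_{\mathtt{H}}\mathtt{I}_{\mathtt{H}},\\ \dot{\mathtt{I}}_{\mathtt{L}}&=\hat\beta_{\mathtt{L}}(z_{\mathtt{S}})\mathtt{I}_{\mathtt{L}}(1-\mathtt{I}_{\mathtt{H}}-\mathtt{I}_{\mathtt{L}})-(q_{\mathtt{LH}}+\gamma_{\mathtt{L}})\mathtt{I}_{\mathtt{L}}. \end{align*} Let $\mathcal{D}_2:=\beta_{\mathtt{H}}\gamma_{\mathtt{L}}-\beta_{\mathtt{L}}\gamma_{\mathtt{H}}+\beta_{\mathtt{H}}q_{\mathtt{LH}}-\beta_{\mathtt{L}}q_{\mathtt{LH}}$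 and $\mathcal{N}^{\mathtt{L}}_2:=\gamma_{\mathtt{L}}+q_{\mathtt{LH}}-\hat\beta_{\mathtt{L}}(z_{\mathtt{S}})$. Then the candidate coexistence equilibrium $$\mathbf{E}_3=\Big(\frac{\gamma_{\mathtt{L}}+q_{\mathtt{LH}}}{\hat\beta_{\mathtt{L}}(z_{\mathtt{S}})},\ \frac{q_{\mathtt{LH}}\mathcal{N}^{\mathtt{L}}_2}{w(z_{\mathtt{S}})\mathcal{D}_2},\ \frac{-\mathcal{N}^{\mathtt{L}}_2(\mathcal{D}_2+\beta_{\mathtt{L}}q_{\mathtt{LH}})}{\hat\beta_{\mathtt{L}}(z_{\mathtt{S}})\mathcal{D}_2}\Big)$$ (in coordinates $(\mathtt{S},\mathtt{I}_{\mathtt{H}},\mathtt{I}_{\mathtt{L}})$) does not exist, i.e., its $\mathtt{I}_{\mathtt{H}}$- and $\mathtt{I}_{\mathtt{L}}$-components cannot both be positive.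
   Context: Bi-virus SIS model with mutation only from strain $\mathtt{L}$ to strain $\mathtt{H}$ (rate $q_{\mathtt{LH}}$, with $q_{\mathtt{HL}}=0$); $\mathtt{I}_{\mathtt{H}},\mathtt{I}_{\mathtt{L}}$ infected fractions, $\mathtt{S}=1-\mathtt{I}_{\mathtt{H}}-\mathtt{I}_{\mathtt{L}}$, $\beta$'s transmission rates, $\gamma$'s recovery rates, $z_{\mathtt{S}}$ fraction of susceptibles protected, protection scaling infection rates by $\alpha$. *)

(* Defs.v *)
From Stdlib Require Import Reals.
Open Scope R_scope.

Definition wz (alpha zS : R) : R := alpha * zS + 1 - zS.

Definition beta_hat (beta alpha zS : R) : R := beta * wz alpha zS.

Definition dIH (bH bL gH gL qLH alpha zS IH IL : R) : R :=
  beta_hat bH alpha zS * IH * (1 - IH - IL) + qLH * IL - gH * IH.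
Definition dIL (bH bL gH gL qLH alpha zS IH IL : R) : R :=
  beta_hat bL alpha zS * IL * (1 - IH - IL) - (qLH + gL) * IL.

Definition D2 (bH bL gH gL qLH : R) : R :=
  bH * gL - bL * gH + bH * qLH - bL * qLH.

Definition N2L (bL gL qLH alpha zS : R) : R :=
  gL + qLH - beta_hat bL alpha zS.

Definition E3_S (bH bL gH gL qLH alpha zS : R) : R :=
  (gL + qLH) / beta_hat bL alpha zS.
Definition E3_IH (bH bL gH gL qLH alpha zS : R) : R :=
  qLH * N2L bL gL qLH alpha zS / (wz alpha zS * D2 bH bL gH gL qLH).
Definition E3_IL (bH bL gH gL qLH alpha zS : R) : R :=
  - N2L bL gL qLH alpha zS * (D2 bH bL gH gL qLH + bL * qLH)
  / (beta_hat bL alpha zS * D2 bH bL gH gL qLH).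

(* Main.v *)
Require Import Defs.
From Stdlib Require Import Reals Lra Psatz.
Open Scope R_scope.

Theorem proposition2 (bH bL gH gL qLH alpha zS : R) :
  0 < bH -> 0 < bL -> 0 < gH -> 0 < gL ->
  bH / gH > bL / gL -> bH > bL ->
  0 < qLH -> 0 < alpha < 1 -> 0 <= zS <= 1 ->
  ~ (0 < E3_IH bH bL gH gL qLH alpha zS /\ 0 < E3_IL bH bL gH gL qLH alpha zS).
Proof.
  intros HbH HbL HgH HgL Hr Hb Hq Ha Hz [H1 H2].
  unfold E3_IH, E3_IL, beta_hat in *.
  assert (Hw : 0 < wz alpha zS) by (unfold wz; nra).
  assert (Hc : bH * gL > bL * gH).
  { assert (E1 : bH / gH * (gH * gL) = bH * gL) by (field; lra).
    assert (E2 : bL / gL * (gH * gL) = bL * gH) by (field; lra).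
    rewrite <- E1, <- E2. apply Rmult_gt_compat_r; nra. }
  assert (HD : 0 < D2 bH bL gH gL qLH) by (unfold D2; nra).
  set (w := wz alpha zS) in *. set (D := D2 bH bL gH gL qLH) in *.
  set (N := N2L bL gL qLH alpha zS) in *.
  assert (E1 : qLH * N / (w * D) * (w * D) = qLH * N) by (field; lra).
  assert (E2 : - N * (D + bL * qLH) / (bL * w * D) * (bL * w * D)
               = - N * (D + bL * qLH)) by (field; lra).
  assert (P1 : 0 < qLH * N) by (rewrite <- E1; apply Rmult_lt_0_compat; nra).
  assert (P2 : 0 < - N * (D + bL * qLH))
    by (rewrite <- E2; apply Rmult_lt_0_compat; [exact H2 | nra]).
  assert (HN : 0 < N).
  { destruct (Rle_lt_dec N 0) as [h|h]; [|exact h].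
    assert (qLH * N <= 0) by (rewrite <- (Rmult_0_r qLH); apply Rmult_le_compat_l; lra). lra. }
  assert (0 < N * (D + bL * qLH)) by (apply Rmult_lt_0_compat; nra).
  lra.
Qed.
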